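(* For the push-pull ring with $M\ge 2$ servers in the critical case $\lambda_j=\mu_j$ for all $j$, the action drift matrix $\mathbf{D}$ satisfies $\mathrm{rank}(\mathbf{D})=M$ if $M$ is odd and $\mathrm{rank}(\mathbf{D})=M-1$ if $M$ is even. Moreover, when $M$ is even, the vector $\boldsymbol{\alpha}=(+\lambda_1^{-1},-\lambda_2^{-1},+\lambda_3^{-1},-\lambda_4^{-1},\dots,+\lambda_{M-1}^{-1},-\lambda_M^{-1})'$ satisfies $\mathbf{D}\boldsymbol{\alpha}=\mathbf{0}$.
   Context: A push-pull ring has $M\ge2$ servers and $M$ job streams, with strictly positive rates $\lambda_j,\mu_j$; indices are modulo $M$ on $\{1,\dots,M\}$. Server $j$ can either push on stream $j$ (exponential rate $\lambda_j$, adding a job to queue $j$) or pull from queue $j-1$ (exponential rate $\mu_{j-1}$, removing a job from queue $j-1$). An action is an element $a\in\{\text{push},\text{pull}\}^M$ specifying the operation of each server; there are $2^M$ actions. For an action $a$, let $r_a$ be the sum of the rates of the $M$ chosen operations, and let the drift vector $\boldsymbol{\Delta}_a\in\mathbb{R}^M$ be the expected one-step increment of the embedded jump chain under $a$ (each chosen operation completes first with probability its rate divided by $r_a$): its $j$-th entry is $\big(\lambda_j\mathbf{1}\{\text{server } j \text{ pushes}\}-\mu_j\mathbf{1}\{\text{server } j+1 \text{ pulls}\}\big)/r_a$. The action drift matrix $\mathbf{D}$ is the $2^M\times M$ matrix whose rows are $\boldsymbol{\Delta}_a'$ over all $2^M$ actions $a$. *)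

(* Defs.v *)
From mathcomp Require Import all_boot all_order all_algebra.
Set Implicit Arguments. Unset Strict Implicit. Unset Printing Implicit Defensive.
Import Order.TTheory GRing.Theory Num.Theory.
Local Open Scope ring_scope.

(* Servers / streams are indexed by 'I_M (0-based: paper's j is our j-1).
   Indices are cyclic: the successor of j is ordS j, the predecessor ord_pred j. *)

(* An action assigns to each server a boolean: true = push, false = pull. *)
Definition action (M : nat) := {ffun 'I_M -> bool}.

(* Total rate r_a: server k pushing contributes lambda_k, pulling from
   queue k-1 contributes mu_{k-1}. *)
Definition total_rate (R : fieldType) (M : nat) (lam mu : 'I_M -> R)
    (a : action M) : R :=
  \sum_(k < M) (if a k then lam k else mu (ord_pred k)).

Definition drift (R : fieldType) (M : nat) (lam mu : 'I_M -> R)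
    (a : action M) : 'rV[R]_M :=
  \row_(j < M)
    (((if a j then lam j else 0) - (if ~~ a (ordS j) then mu j else 0))
       / total_rate lam mu a).

Definition drift_matrix (R : fieldType) (M : nat) (lam mu : 'I_M -> R)
    : 'M[R]_(#|{: action M}|, M) :=
  \matrix_(i < #|{: action M}|) drift lam mu (enum_val i).

(* alpha = (+1/lam_1, -1/lam_2, +1/lam_3, ...) as a column vector
   (0-based index i even <-> paper index i+1 odd <-> sign +). *)
Definition alpha_vec (R : fieldType) (M : nat) (lam : 'I_M -> R) : 'cV[R]_M :=
  \col_(i < M) ((if odd i then -1 else 1) * (lam i)^-1).

(* Main.v *)
Require Import Defs.
From mathcomp Require Import all_boot all_order all_algebra.
From mathcomp Require Import ring lra zify.
Import Order.TTheory GRing.Theory Num.Theory.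
Set Implicit Arguments. Unset Strict Implicit.
Local Open Scope ring_scope.

Lemma rate_gt0 (R : realFieldType) M (lam mu : 'I_M -> R) (a : action M) (i0 : 'I_M) :
  (forall j, 0 < lam j) -> (forall j, 0 < mu j) -> 0 < total_rate lam mu a.
Proof.
move=> hl hm; rewrite /total_rate (bigD1 i0) //=.
apply: (@lt_le_trans _ _ (if a i0 then lam i0 else mu (ord_pred i0))).
  by case: (a i0).
rewrite lerDl; apply: sumr_ge0 => i _; case: (a i); exact: ltW.
Qed.

Lemma row_drift (R : fieldType) M (lam mu : 'I_M -> R) (x : 'cV_M) (a : action M) :
  (drift_matrix lam mu *m x) (enum_rank a) 0 =
  (\sum_j ((if a j then lam j else 0) - (if ~~ a (ordS j) then mu j else 0)) * x j 0)
   / total_rate lam mu a.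
Proof.
rewrite !mxE mulr_suml; apply: eq_bigr => j _.
by rewrite /drift_matrix !mxE enum_rankK mulrAC.
Qed.

Lemma ker_rel (R : realFieldType) M (lam mu : 'I_M -> R) (x : 'cV_M) :
  (forall j, 0 < lam j) -> (forall j, 0 < mu j) -> (forall j, lam j = mu j) ->
  drift_matrix lam mu *m x = 0 ->
  forall k, lam (ordS k) * x (ordS k) 0 = - (lam k * x k 0).
Proof.
move=> hl hm he hx k.
have S0 : forall a : action M,
  \sum_j ((if a j then lam j else 0) - (if ~~ a (ordS j) then mu j else 0)) * x j 0 = 0.
  move=> a; have := row_drift lam mu x a; rewrite hx mxE => /esym /eqP.
  rewrite mulf_eq0 invr_eq0 => /orP [/eqP //|].
  by rewrite gt_eqF // (rate_gt0 _ k hl hm).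
have := S0 [ffun _ => false].
have := S0 [ffun j => j == ordS k].
under eq_bigr => j _ do rewrite !ffunE (inj_eq (@ordS_inj _)) -he mulrBl.
rewrite sumrB (bigD1 (ordS k)) //= eqxx big1 => [|j /negbTE -> //]; last by rewrite mul0r.
rewrite (bigD1 k) //= eqxx /= mul0r add0r.
under [X in _ - X = _ -> _]eq_bigr => j /negbTE -> do rewrite /=.
move=> H1.
under eq_bigr => j _ do rewrite !ffunE /= -he.
move=> H0.
have : \sum_(i < M | i != k) lam i * x i 0 = - (lam k * x k 0).
  have Hall : \sum_j lam j * x j 0 = - \sum_j (0 - lam j) * x j 0.
    by rewrite -sumrN; apply: eq_bigr => j _; ring.
  rewrite H0 oppr0 in Hall.
  by move: Hall; rewrite (bigD1 k) //= => /eqP; rewrite addrC addr_eq0 => /eqP.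
move=> H2; move: H1; rewrite H2 addr0 opprK.
by move/eqP; rewrite addr_eq0 => /eqP.
Qed.

Definition sg (R : nzRingType) (i : nat) : R := if odd i then -1 else 1.

Lemma ordS_inord n i : (i < n)%N -> ordS (inord i : 'I_n.+1) = inord i.+1.
Proof. by move=> hi; apply: val_inj; rewrite /= !inordK ?modn_small // ltnS // ltnW. Qed.

Lemma alt (R : nzRingType) n (y : 'I_n.+1 -> R) :
  (forall k, y (ordS k) = - y k) -> forall i : 'I_n.+1, y i = sg R i * y ord0.
Proof.
move=> hy.
suff H : forall i, (i < n.+1)%N -> y (inord i) = sg R i * y ord0.
  by move=> i; rewrite -(inord_val i) H // inordK.
elim=> [|i IH] hi.
  by rewrite /sg /= mul1r; congr y; apply: val_inj; rewrite /= inordK.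
rewrite -ordS_inord // hy IH ?(ltnW hi) // /sg /=; case: (odd i); rewrite ?mulN1r ?mul1r ?opprK //.
Qed.

Lemma alt_wrap (R : nzRingType) n (y : 'I_n.+1 -> R) :
  (forall k, y (ordS k) = - y k) -> y ord0 = - (sg R n * y ord0).
Proof.
move=> hy; have := alt hy (inord n); rewrite inordK // => <-; rewrite -hy; congr y.
by apply: val_inj; rewrite /= inordK // modnn.
Qed.

Lemma sg_ordS (R : nzRingType) M (j : 'I_M) : ~~ odd M -> sg R (ordS j) = - sg R j.
Proof.
move=> hM; rewrite /sg /=.
have := ltn_ord j; rewrite leq_eqVlt => /orP [/eqP hj|hj].
  rewrite hj modnn /=; have : odd j.+1 = false by rewrite hj (negbTE hM).
  by move=> /= /negbFE ->; rewrite opprK.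
by rewrite modn_small //=; case: (odd j); rewrite ?opprK.
Qed.

Lemma sum_ordS (R : nzRingType) M (f : 'I_M -> R) : \sum_j f (ordS j) = \sum_j f j.
Proof. by rewrite [RHS](reindex_inj (@ordS_inj M)). Qed.

Lemma D_alpha (R : realFieldType) M (lam mu : 'I_M -> R) :
  (forall j, 0 < lam j) -> (forall j, 0 < mu j) -> (forall j, lam j = mu j) ->
  ~~ odd M -> drift_matrix lam mu *m alpha_vec lam = 0.
Proof.
move=> hl hm he hM; apply/matrixP => i j; rewrite ord1 -(enum_valK i) row_drift mxE.
set a := enum_val i.
have term : forall k : 'I_M,
  ((if a k then lam k else 0) - (if ~~ a (ordS k) then mu k else 0)) * alpha_vec lam k 0
  = (a k)%:R * sg R k - sg R k + (a (ordS k))%:R * sg R k.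
  move=> k; rewrite mxE -he -/(sg R k).
  have lk : lam k != 0 by rewrite gt_eqF.
  by case: (a k); case: (a (ordS k)) => /=; field.
rewrite (eq_bigr _ (fun k _ => term k)) !big_split /=.
have h1 : \sum_k (a (ordS k))%:R * sg R k = - \sum_k (a k)%:R * sg R k.
  rewrite -(sum_ordS (fun k => (a k)%:R * sg R k)) -sumrN; apply: eq_bigr => k _.
  by rewrite sg_ordS // mulrN opprK.
have h2 : \sum_(k < M) sg R k = 0 :> R.
  have : \sum_(k < M) sg R k = - \sum_(k < M) sg R k :> R.
    by rewrite -[LHS](sum_ordS (fun k => sg R k)) -sumrN; apply: eq_bigr => k _; rewrite sg_ordS.
  move=> h; lra.
by rewrite h1 sumrN h2 subr0 subrr mul0r.
Qed.

Lemma rowK (R : realFieldType) n (lam mu : 'I_n.+1 -> R) (u : 'rV_n.+1) :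
  (forall j, 0 < lam j) -> (forall j, 0 < mu j) -> (forall j, lam j = mu j) ->
  (u <= kermx (drift_matrix lam mu)^T)%MS ->
  u = (lam ord0 * u 0 ord0) *: (alpha_vec lam)^T /\ (~~ odd n -> u = 0).
Proof.
move=> hl hm he /sub_kermxP hu.
have hx : drift_matrix lam mu *m u^T = 0 by rewrite -[drift_matrix _ _]trmxK -trmx_mul hu trmx0.
have hy := ker_rel hl hm he hx.
set y := fun k => lam k * u^T k 0.
have hy' : forall k, y (ordS k) = - y k by exact: hy.
have ha := alt hy'.
have eq1 : u = (lam ord0 * u 0 ord0) *: (alpha_vec lam)^T.
  apply/matrixP => i k; rewrite ord1 !mxE.
  have := ha k; rewrite /y !mxE => h.
  have lk : lam k != 0 by rewrite gt_eqF.
  apply: (mulfI lk); rewrite h /sg; case: (odd k); field; exact: lk.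
split => // hn; rewrite eq1.
have hw := alt_wrap hy'; rewrite /sg (negbTE hn) mul1r /y mxE in hw.
have -> : lam ord0 * u 0 ord0 = 0 by lra.
by rewrite scale0r.
Qed.

Theorem lemma2 (R : realFieldType) (M : nat) (lam mu : 'I_M -> R) :
  (2 <= M)%N ->
  (forall j, 0 < lam j) -> (forall j, 0 < mu j) ->
  (forall j, lam j = mu j) ->
  (\rank (drift_matrix lam mu) = if odd M then M else M.-1)%N /\
  (~~ odd M -> drift_matrix lam mu *m alpha_vec lam = 0).
Proof.
case: M lam mu => [|[|n]] lam mu // _ hl hm he.
split; last exact: D_alpha.
have hk := mxrank_ker (drift_matrix lam mu)^T.
have hle := rank_leq_row (drift_matrix lam mu)^T.
rewrite -mxrank_tr.
have hrow := fun u => @rowK R n.+1 lam mu u hl hm he.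
case: ifP => hodd.
  have : kermx (drift_matrix lam mu)^T = 0.
    apply/eqP; rewrite -submx0; apply/row_subP => i.
    rewrite ((hrow _ (row_sub i _)).2) ?sub0mx //.
  move=> h0; rewrite h0 mxrank0 in hk; lia.
have r1 : \rank (kermx (drift_matrix lam mu)^T) = 1%N.
  apply/eqP; rewrite eqn_leq; apply/andP; split.
    apply: leq_trans (rank_leq_row (alpha_vec lam)^T).
    apply: mxrankS; apply/row_subP => i.
    rewrite ((hrow _ (row_sub i _)).1); exact: scalemx_sub.
  apply: leq_trans (mxrankS (_ : ((alpha_vec lam)^T <= _)%MS)).
    rewrite lt0n mxrank_eq0; apply/eqP => /matrixP /(_ 0 ord0).
    rewrite !mxE /= mul1r => /eqP; rewrite invr_eq0 gt_eqF //.
  apply/sub_kermxP; rewrite -trmx_mul D_alpha ?trmx0 //.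
  by rewrite hodd.
rewrite r1 in hk; move: hk hle; set r := \rank _ => hk hle; rewrite /=; lia.
Qed.
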